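(* Let $X$ be a finite set with at least two elements. If a transition function $t$ has a persistent craving representation, then for every $x\in X$, $\nu_X\ne\nu_{X\setminus\{x\}}$.
   Context: $\mathcal{L}(X)$ is the set of linear orders on $X$, $M(\succ,A)$ the $\succ$-maximal element of $A$. Given a linear order $\rhd$, the craving preferences $\{\succ_x\}_{x\in X}$ are: $x\succ_x y$ for all $y\ne x$, and for $y,z\ne x$, $y\succ_x z$ iff $y\rhd z$. A distribution $\nu$ supported on $\{\succ_x\}$ is craving monotonic w.r.t. $\rhd$ if $x\rhd y$ implies $\nu(\succ_x)>\nu(\succ_y)>0$. A persistence function is $\phi:X^2\to[0,1)$ with $\phi(x,x)=0$, $\phi(x,y)>0$ for $x\ne y$. A transition function $t:X\times\mathcal{L}(X)\to\Delta(\mathcal{L}(X))$ has a persistent craving representation if for some $\rhd$, craving monotonic $\nu$ and persistence function $\phi$: $t(x,\succ_y)=\phi(x,y)\delta_{\succ_y}+(1-\phi(x,y))\nu$ for all $x,y$ and $t(x,\succ)=\nu$ for $\succ$ outside the support of $\nu$. For nonempty $A\subseteq X$, $\nu_A$ is the unique stationary distribution of the Markov chain on $\mathcal{L}(X)$ with $m_A(\succ,\succ')=t_{\succ'}(M(\succ,A),\succ)$. *)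

(* Defs.v *)
From HB Require Import structures.
From mathcomp Require Import all_boot all_order all_algebra.
From mathcomp Require Import reals.
Set Implicit Arguments. Unset Strict Implicit. Unset Printing Implicit Defensive.
Import Order.TTheory GRing.Theory Num.Theory.
Local Open Scope ring_scope.

Section Defs.
Variable X : finType.

(* A (strict) linear order on X, encoded as a boolean relation r x y = "x ≻ y". *)
Definition is_lin_order (r : {ffun X -> {ffun X -> bool}}) : bool :=
  [&& [forall x, ~~ r x x],
      [forall x, forall y, forall z, r x y ==> r y z ==> r x z] &
      [forall x, forall y, (x != y) ==> (r x y || r y x)]].

Definition linord := {r : {ffun X -> {ffun X -> bool}} | is_lin_order r}.

Definition lo (r : linord) (x y : X) : bool := (val r) x y.

Definition maxel (r : linord) (A : {set X}) : option X :=
  [pick m in A | [forall y in A, (y != m) ==> lo r m y]].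

Variable R : realType.

Definition is_distr (T : finType) (mu : {ffun T -> R}) : Prop :=
  (forall a, 0 <= mu a) /\ \sum_a mu a = 1.

Definition is_craving (lhd : linord) (x : X) (r : linord) : bool :=
  [forall y, (y != x) ==> lo r x y] &&
  [forall y, forall z, (y != x) ==> (z != x) ==> (lo r y z == lo lhd y z)].

Definition craving_monotonic (lhd : linord) (c : X -> linord)
    (nu : {ffun linord -> R}) : Prop :=
  is_distr nu /\
  (forall r, nu r != 0 -> exists x, r = c x) /\
  (forall x y, lo lhd x y -> nu (c x) > nu (c y) /\ nu (c y) > 0).

Definition persistence (phi : X -> X -> R) : Prop :=
  (forall x y, 0 <= phi x y /\ phi x y < 1) /\
  (forall x, phi x x = 0) /\
  (forall x y, x != y -> phi x y > 0).

Definition persistent_craving_rep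
    (t : X -> linord -> {ffun linord -> R}) : Prop :=
  exists (lhd : linord) (c : X -> linord) (nu : {ffun linord -> R})
         (phi : X -> X -> R),
    (forall x, is_craving lhd x (c x)) /\
    craving_monotonic lhd c nu /\
    persistence phi /\
    (forall x y r', t x (c y) r' =
        phi x y * (r' == c y)%:R + (1 - phi x y) * nu r') /\
    (forall x r, nu r = 0 -> t x r = nu).

Definition mA (t : X -> linord -> {ffun linord -> R}) (A : {set X})
    (r r' : linord) : R :=
  if maxel r A is Some m then t m r r' else 0.

Definition stationary (t : X -> linord -> {ffun linord -> R}) (A : {set X})
    (mu : {ffun linord -> R}) : Prop :=
  is_distr mu /\ forall r', mu r' = \sum_r mu r * mA t A r r'.

End Defs.

(* Main.v *)
Require Import Defs.
From HB Require Import structures.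
From mathcomp Require Import all_boot all_order all_algebra.
From mathcomp Require Import reals.
From mathcomp Require Import lra.
Import Order.TTheory GRing.Theory Num.Theory.
Local Open Scope ring_scope.
Set Implicit Arguments. Unset Strict Implicit.

Lemma lo_asym (X : finType) (r : linord X) a b : lo r a b -> lo r b a -> False.
Proof.
move: (valP r) => /and3P [/forallP irr /forallP tr _]; rewrite /lo.
move=> hab hba.
have h := forallP (forallP (tr a) b) a.
by move: (irr a); rewrite (implyP (implyP h hab) hba).
Qed.

Lemma lo_total (X : finType) (r : linord X) a b : a != b -> lo r a b || lo r b a.
Proof.
move: (valP r) => /and3P [_ _ /forallP tot]; rewrite /lo.
exact: (implyP (forallP (tot a) b)).
Qed.

Lemma crav_top (X : finType) lhd y (r : linord X) w :
  is_craving lhd y r -> w != y -> lo r y w.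
Proof. by move=> /andP [/forallP H _] /(implyP (H w)). Qed.

Lemma maxel_c (X : finType) lhd y (r : linord X) (A : {set X}) :
  is_craving lhd y r -> y \in A -> maxel r A = Some y.
Proof.
move=> hc yA; rewrite /maxel; case: pickP => [m /andP [mA /forall_inP H] | H].
- congr Some; apply/eqP; apply/negPn/negP => ne.
  have h1 := implyP (H y yA) ltac:(by rewrite eq_sym).
  exact: (lo_asym h1 (crav_top hc ne)).
- move: (H y); rewrite yA /=; move/negP; case.
  apply/forall_inP => w _; apply/implyP => ne; exact: (crav_top hc ne).
Qed.

Theorem proposition3 (R : realType) (X : finType) (hX : (1 < #|X|)%N)
  (t : X -> linord X -> {ffun linord X -> R})
  (ht : forall x r, is_distr (t x r))
  (hrep : persistent_craving_rep t) :
  forall (x : X) (nuX nuXx : {ffun linord X -> R}),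
    stationary t [set: X] nuX ->
    stationary t ([set: X] :\ x) nuXx ->
    nuX <> nuXx.
Proof.
move: hrep => [lhd [c [nu [phi [hc [[[nu0 nu1] [hsupp hmono]]
   [[hphi1 [hphi0 hphipos]] [ht1 ht2]]]]]]]].
have tcc : forall y, t y (c y) = nu.
  by move=> y; apply/ffunP => r'; rewrite ht1 hphi0 mul0r subr0 mul1r add0r.
have row : forall (A : {set X}) r, (forall y, r = c y -> y \in A) ->
    forall r', mA t A r r' = (maxel r A != None)%:R * nu r'.
  move=> A r hA r'; rewrite /mA; case E: maxel => [m|]; last by rewrite mul0r.
  rewrite mul1r; case: (eqVneq (nu r) 0) => h; first by rewrite ht2.
  have [y ry] := hsupp r h; subst r.
  by move: E; rewrite (maxel_c (hc y) (hA y erefl)) => -[<-]; rewrite tcc.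
move=> x nuX nuXx [[nuX0 nuX1] statX] [_ statXx] eqn; subst nuXx.
set S := \sum_r nuX r * (maxel r [set: X] != None)%:R.
have eX : forall r', nuX r' = S * nu r'.
  move=> r'; rewrite statX /S big_distrl /=; apply: eq_bigr => r _.
  by rewrite (row _ r (fun y _ => in_setT y)) mulrA.
have S1 : S = 1.
  by rewrite -nuX1 -[S]mulr1 -nu1 big_distrr /=; apply: eq_bigr => r _; rewrite eX.
have enu : nuX = nu by apply/ffunP => r'; rewrite eX S1 mul1r.
rewrite enu in statXx.
have [y hyx] : exists y, y != x.
  case: (pickP (predC1 x)) => [y hy | H]; first by exists y.
  have : [set: X] \subset [set x].
    by apply/subsetP => z _; rewrite inE; move: (H z) => /= /negbFE.
  by move/subset_leq_card; rewrite cardsT cards1 leqNgt hX.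
have cyx : c y != c x.
  apply/eqP => e.
  have h1 := crav_top (hc x) hyx.
  have h3 := crav_top (hc y) (ltac:(by rewrite eq_sym) : x != y); rewrite e in h3.
  by apply: (lo_asym h1 h3).
have hxy : x != y by rewrite eq_sym.
have py : 0 < nu (c y).
  case/orP: (lo_total lhd hyx) => h; last by case: (hmono _ _ h).
  by case: (hmono _ _ h) => a b; exact: lt_trans b a.
have px : 0 < nu (c x).
  case/orP: (lo_total lhd hyx) => h; first by case: (hmono _ _ h).
  by case: (hmono _ _ h) => a b; exact: lt_trans b a.
have p1 : nu (c x) + nu (c y) <= 1.
  rewrite -nu1 (bigD1 (c x)) //= (bigD1 (c y)) //= lerD2l lerDl.
  by apply: sumr_ge0 => r _; apply: nu0.
have hs : \sum_(r | r != c x) nu r = 1 - nu (c x).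
  by move: nu1; rewrite (bigD1 (c x)) //= => h; rewrite -h addrC addrK.
set A := [set: X] :\ x.
have rest : \sum_(r | r != c x) nu r * mA t A r (c x) = (1 - nu (c x)) * nu (c x).
  rewrite -hs big_distrl /=; apply: eq_bigr => r hr.
  case: (eqVneq (nu r) 0) => h; first by rewrite h !mul0r.
  have inA : forall w, r = c w -> w \in A.
    move=> w rw; rewrite !inE andbT; apply/eqP => wx; subst w r.
    by rewrite eqxx in hr.
  have [z rz] := hsupp r h.
  rewrite (row _ r inA); have zA := inA z rz; subst r.
  by rewrite (maxel_c (hc z) zA) mul1r.
have := statXx (c x); rewrite (bigD1 (c x)) //= rest /mA.
case E: maxel => [m|]; last by rewrite mulr0 => h; nra.
have mA' : m \in A.
  by move: E; rewrite /maxel; case: pickP => // m' /andP [h _] [<-].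
have mx : m != x by move: mA'; rewrite !inE andbT.
have [ph0 ph1] := hphi1 m x.
have php := hphipos m x mx.
rewrite ht1 eqxx mulr1 => h.
have : 0 < nu (c x) * phi m x * (1 - nu (c x)).
  by rewrite !mulr_gt0 // subr_gt0; lra.
nra.
Qed.
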